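(* Let $u,v,s$ satisfy $1<s<u<v^{-1}$ and $q=s^{-2}$. Then the constants $$a=\frac{ v (u-s^{-1}) (s^{-1} u-1)}{(1-u v) (1- s^{-2} u v)},\qquad b=\frac{ s^2-1}{(u-s)(1-su)},$$ $$c=\frac{1}{2} \left(a \left(\frac{1}{(u-s)^2}-\frac{s^2}{(1-s u)^2}\right)-\frac{s^{-4} v^2}{(1-s^{-2} u v)^2}+\frac{v^2}{(1-u v)^2} \right),\qquad d=\frac{- \sqrt{2 c}}{b}$$ satisfy $a>0$, $b<0$, $c>0$, $d>0$. *)

(* Defs.v *)
From Stdlib Require Import Reals.
Open Scope R_scope.

Definition q5 (s : R) : R := / (s ^ 2).

Definition a5 (u v s : R) : R :=
  v * (u - / s) * (/ s * u - 1) / ((1 - u * v) * (1 - / (s ^ 2) * u * v)).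

Definition b5 (u s : R) : R := (s ^ 2 - 1) / ((u - s) * (1 - s * u)).

Definition c5 (u v s : R) : R :=
  / 2 * (a5 u v s * (/ ((u - s) ^ 2) - s ^ 2 / ((1 - s * u) ^ 2))
         - / (s ^ 4) * v ^ 2 / ((1 - / (s ^ 2) * u * v) ^ 2)
         + v ^ 2 / ((1 - u * v) ^ 2)).

Definition d5 (u v s : R) : R := - sqrt (2 * c5 u v s) / b5 u s.

(* Main.v *)
Require Import Defs.
From Stdlib Require Import Reals Lra.
Open Scope R_scope.

Theorem lemma5p1 (u v s q : R) :
  1 < s -> s < u -> u < / v -> q = / (s ^ 2) ->
  0 < a5 u v s /\ b5 u s < 0 /\ 0 < c5 u v s /\ 0 < d5 u v s.
Proof.
  intros H1 H2 H3 _.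
  assert (Hv : 0 < v).
  { destruct (Rtotal_order v 0) as [Hn|[H0|Hp]]; auto.
    - pose proof (Rinv_lt_0_compat v Hn); lra.
    - subst v. rewrite Rinv_0 in H3; lra. }
  assert (Huv : u * v < 1).
  { apply Rmult_lt_compat_r with (r := v) in H3; auto.
    rewrite Rinv_l in H3; lra. }
  assert (Hs0 : 0 < s) by lra.
  assert (Hsuv : u * v < s^2) by nra.
  assert (Hss : 1 < s^2) by nra.
  assert (Ha : 0 < a5 u v s).
  { unfold a5.
    replace (v * (u - / s) * (/ s * u - 1) / ((1 - u * v) * (1 - / (s ^ 2) * u * v)))
      with (v * (u*s - 1) * (u - s) / ((1 - u * v) * (s^2 - u * v))) by (field; lra).
    apply Rdiv_lt_0_compat.
    - apply Rmult_lt_0_compat; [apply Rmult_lt_0_compat|]; nra.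
    - apply Rmult_lt_0_compat; lra. }
  assert (Hb : b5 u s < 0).
  { unfold b5.
    replace ((s ^ 2 - 1) / ((u - s) * (1 - s * u))) with (- ((s^2 - 1) / ((u - s) * (s*u - 1))))
      by (field; nra).
    assert (0 < (s^2 - 1) / ((u - s) * (s*u - 1))); [|lra].
    apply Rdiv_lt_0_compat; [lra|]. apply Rmult_lt_0_compat; nra. }
  assert (HX : 0 < / ((u - s) ^ 2) - s ^ 2 / ((1 - s * u) ^ 2)).
  { replace (/ ((u - s) ^ 2) - s ^ 2 / ((1 - s * u) ^ 2))
      with (((s*u-1)^2 - (s*(u-s))^2) / ((u-s)^2 * (s*u-1)^2)) by (field; nra).
    apply Rdiv_lt_0_compat.
    - assert (0 < s*(u-s)) by nra. assert (s*(u-s) < s*u-1) by nra. nra.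
    - assert (0 < s*u-1) by nra. assert (0 < u-s) by lra.
      apply Rmult_lt_0_compat; apply pow_lt; lra. }
  assert (HY : 0 < - / (s ^ 4) * v ^ 2 / ((1 - / (s ^ 2) * u * v) ^ 2) + v ^ 2 / ((1 - u * v) ^ 2)).
  { replace (- / (s ^ 4) * v ^ 2 / ((1 - / (s ^ 2) * u * v) ^ 2) + v ^ 2 / ((1 - u * v) ^ 2))
      with (v^2 * ((s^2 - u*v)^2 - (1 - u*v)^2) / ((1-u*v)^2 * (s^2-u*v)^2)) by (field; nra).
    apply Rdiv_lt_0_compat.
    - apply Rmult_lt_0_compat; [nra|]. nra.
    - apply Rmult_lt_0_compat; apply pow_lt; lra. }
  assert (Hc : 0 < c5 u v s).
  { unfold c5. assert (0 < a5 u v s * (/ ((u - s) ^ 2) - s ^ 2 / ((1 - s * u) ^ 2)))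
      by (apply Rmult_lt_0_compat; auto). lra. }
  repeat split; auto.
  unfold d5.
  assert (0 < sqrt (2 * c5 u v s)) by (apply sqrt_lt_R0; lra).
  replace (- sqrt (2 * c5 u v s) / b5 u s) with (sqrt (2 * c5 u v s) / (- b5 u s)) by (field; lra).
  apply Rdiv_lt_0_compat; lra.
Qed.
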